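(* Let $P,Q$ be partially ordered sets, neither of which has an upper bound for the whole set (i.e. $P$ and $Q$ are unbounded). Suppose there exist functions $\varphi:P\to Q$ and $\psi:Q\to P$ such that for every $p\in P$ and $q\in Q$ either $p\le\psi(q)$ or $q\le\varphi(p)$. Then $\operatorname{add}(P)=\operatorname{cof}(P)=\operatorname{cof}(Q)=\operatorname{add}(Q)$.
   Context: For a partially ordered set $P$: $\operatorname{add}(P)$ is the smallest cardinality of a subset $A\subset P$ that has no upper bound in $P$ (i.e. for every $y\in P$ there is $x\in A$ with $x\not\le y$), and $\operatorname{cof}(P)$ is the smallest cardinality of a cofinal subset $A\subset P$ (i.e. for every $x\in P$ there is $y\in A$ with $x\le y$). *)

(* Defs.v *)
From Stdlib Require Import Classical.

Set Implicit Arguments.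

Definition is_poset (T : Type) (le : T -> T -> Prop) : Prop :=
  (forall x, le x x) /\
  (forall x y, le x y -> le y x -> x = y) /\
  (forall x y z, le x y -> le y z -> le x z).

Definition unbounded_set (T : Type) (le : T -> T -> Prop) (A : T -> Prop) : Prop :=
  forall y : T, exists x : T, A x /\ ~ le x y.

Definition cofinal_set (T : Type) (le : T -> T -> Prop) (A : T -> Prop) : Prop :=
  forall x : T, exists y : T, A y /\ le x y.

Definition card_le (T U : Type) (A : T -> Prop) (B : U -> Prop) : Prop :=
  exists f : {x : T | A x} -> {y : U | B y},
    forall a1 a2, f a1 = f a2 -> a1 = a2.

Definition equipotent (T U : Type) (A : T -> Prop) (B : U -> Prop) : Prop :=
  exists f : {x : T | A x} -> {y : U | B y},
    (forall a1 a2, f a1 = f a2 -> a1 = a2) /\ (forall b, exists a, f a = b).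

Definition is_add_witness (T : Type) (le : T -> T -> Prop) (A : T -> Prop) : Prop :=
  unbounded_set le A /\ forall B : T -> Prop, unbounded_set le B -> card_le A B.

Definition is_cof_witness (T : Type) (le : T -> T -> Prop) (A : T -> Prop) : Prop :=
  cofinal_set le A /\ forall B : T -> Prop, cofinal_set le B -> card_le A B.

(* Main.v *)
Require Import Defs.
From mathcomp Require Import all_boot boolp wochoice.
From Stdlib Require Import ProofIrrelevance Classical.
Set Implicit Arguments.
Lemma wo_exists (T:Type) : exists R : T->T->Prop, (forall x y, R x y \/ R y x) /\ (forall x y, R x y -> R y x -> x = y) /\ (forall x y z, R x y -> R y z -> R x z) /\ (forall S : T -> Prop, (exists x, S x) -> exists z, S z /\ forall x, S x -> R z x).
Proof.
have [R wR] := well_ordering_principle {classic T}.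
have wc : wo_chain R predT by rewrite /wo_chain /prop_within; move=> A _; exact: wR.
have tot := wo_chainW wc.
have anti := wo_chain_antisymmetric wc.
have refl := wo_chain_reflexive wc.
have Rmin : forall S : T -> Prop, (exists x, S x) -> exists z, S z /\ forall x, S x -> R z x.
  move=> S [x Sx].
  have ne : nonempty [pred x : {classic T} | `[< S x >]].
    by exists x; rewrite inE; apply/asboolP.
  have [z [[Az lb] _]] := wR _ ne.
  exists z; split; first by move: Az; rewrite inE => /asboolP.
  by move=> y Sy; apply: lb; rewrite inE; apply/asboolP.
exists (fun x y => R x y); split; [|split; [|split]] => //.
- by move=> x y; have := tot x y isT isT; case/orP; [left|right].
- by move=> x y a b; apply: anti => //; rewrite a b.
- move=> x y z xy yz.
  have [m [Sm lm]] := Rmin (fun w => w = x \/ w = y \/ w = z) (ex_intro _ x (or_introl erefl)).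
  case: Sm => [e|[e|e]]; subst m.
  + by apply: lm; right; right.
  + have e : x = y by apply: anti => //; rewrite xy lm //; left.
    by rewrite e.
  + have e : y = z by apply: anti => //; rewrite yz lm //; right; left.
    by rewrite -e.
Qed.
Lemma sig_eq (A : Type) (P : A -> Prop) (a b : sig P) : proj1_sig a = proj1_sig b -> a = b.
Proof. case: a b => [a pa] [b pb] /= e; subst b; by rewrite (proof_irrelevance _ pa pb). Qed.

Definition segm (T : Type) (R : T -> T -> Prop) x := fun y => R y x /\ y <> x.

Definition validG (T : Type) (R : T -> T -> Prop) (B : T -> Prop) (G : T -> T -> Prop) :=
 (forall x y y', G x y -> G x y' -> y = y') /\ (forall x x' y, G x y -> G x' y -> x = x') /\
 (forall x y, G x y -> B y) /\ (forall x y x', G x y -> R x' x -> exists y', G x' y').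

Lemma zorn_graph (T : Type) (R : T -> T -> Prop) (B : T -> Prop)
  (Rtot : forall x y, R x y \/ R y x) :
  exists G, validG R B G /\ forall H, validG R B H -> (forall x y, G x y -> H x y) -> forall x y, H x y -> G x y.
Proof.
pose X := {classic (T -> T -> Prop)}.
pose S : {pred X} := [pred G : X | `[< validG R B G >]].
pose Rl : rel X := fun G H => `[< forall x y, G x y -> H x y >].
have [z zS zmax] : {z : X | z \in S & {in S, maximal Rl z}}.
  apply: Zorn's_lemma.
  - by move=> G _; apply/asboolP.
  - move=> G H K _ _ _ /asboolP GH /asboolP HK; apply/asboolP => x y /GH; exact: HK.
  - rewrite /prop_within => C CS /wo_chainW Cch.
    pose U : X := fun x y => exists G : X, G \in C /\ G x y.
    have vC : forall G, G \in C -> validG R B G.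
      by move=> G /CS; rewrite inE => /asboolP.
    have cmp : forall G H, G \in C -> H \in C -> (forall x y, G x y -> H x y) \/ (forall x y, H x y -> G x y).
      move=> G H GC HC; have := Cch G H GC HC; case/orP => /asboolP; [left|right] => //.
    exists U.
    + rewrite inE; apply/asboolP; split; [|split; [|split]].
      * move=> x y y' [G [GC Gy]] [H [HC Hy]].
        case: (cmp G H GC HC) => sub.
        - exact: (proj1 (vC H HC) x y y' (sub _ _ Gy) Hy).
        - exact: (proj1 (vC G GC) x y y' Gy (sub _ _ Hy)).
      * move=> x x' y [G [GC Gy]] [H [HC Hy]].
        case: (cmp G H GC HC) => sub.
        - exact: (proj1 (proj2 (vC H HC)) x x' y (sub _ _ Gy) Hy).
        - exact: (proj1 (proj2 (vC G GC)) x x' y Gy (sub _ _ Hy)).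
      * move=> x y [G [GC Gy]]; exact: (proj1 (proj2 (proj2 (vC G GC))) x y Gy).
      * move=> x y x' [G [GC Gy]] Rx.
        have [y' Gy'] := proj2 (proj2 (proj2 (vC G GC))) x y x' Gy Rx.
        by exists y'; exists G.
    + move=> G GC; apply/asboolP => x y Gy; by exists G.
exists z; split; first by move: zS; rewrite inE => /asboolP.
move=> H vH zH.
have HS : H \in S by rewrite inE; apply/asboolP.
have := zmax H HS; rewrite /Rl => m.
have /asboolP := m (introT (asboolP _) zH); done.
Qed.

Lemma key (T : Type) (R : T -> T -> Prop) (Rtot : forall x y, R x y \/ R y x)
  (Ranti : forall x y, R x y -> R y x -> x = y)
  (Rmin : forall S : T -> Prop, (exists x, S x) -> exists z, S z /\ forall x, S x -> R z x)
  (B : T -> Prop) :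
  card_le (fun _ : T => True) B \/ exists x, card_le (segm R x) B /\ card_le B (segm R x).
Proof.
have [G [[Gf [Gi [GB Gd]]] Gmax]] := @zorn_graph T R B Rtot.
case: (Classical_Prop.classic (forall x, exists y, G x y)) => [tot|ntot].
  left.
  exists (fun a => exist B (proj1_sig (cid (tot (proj1_sig a))))
     (GB _ _ (proj2_sig (cid (tot (proj1_sig a)))))).
  move=> a1 a2 e; apply: sig_eq.
  have e' := f_equal (@proj1_sig _ _) e; simpl in e'.
  move: e'; case: (cid _) => y1 h1 /=.
  case: (cid _) => y2 h2 /= e'; subst y2.
  exact: Gi h1 h2.
right.
have [x0 [nx0 x0min]] := Rmin (fun x => ~ exists y, G x y) (Classical_Pred_Type.not_all_ex_not _ _ ntot).
have dom : forall y, segm R x0 y <-> exists z, G y z.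
  move=> y; split.
  - move=> [Ryx nyx]; apply: Classical_Prop.NNPP => ny; apply: nyx; exact: Ranti Ryx (x0min _ ny).
  - move=> [z Gyz]; split.
    + case: (Rtot y x0) => // Rxy; exfalso; apply: nx0; exact: Gd Gyz Rxy.
    + move=> e; subst y; apply: nx0; by exists z.
exists x0.
case: (Classical_Prop.classic (forall b, B b -> exists x, G x b)) => [surj|nsurj].
  split.
  - have tot : forall a : sig (segm R x0), exists y, G (proj1_sig a) y.
      by move=> a; apply/dom; exact: proj2_sig a.
    exists (fun a => exist B (proj1_sig (cid (tot a)))
     (GB _ _ (proj2_sig (cid (tot a))))).
    move=> a1 a2 e; apply: sig_eq.
    have e' := f_equal (@proj1_sig _ _) e; simpl in e'.
    move: e'; case: (cid _) => y1 h1 /=.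
    case: (cid _) => y2 h2 /= e'; subst y2.
    exact: Gi h1 h2.
  - have tot : forall b : sig B, exists x, G x (proj1_sig b).
      by move=> b; apply: surj; exact: proj2_sig b.
    have inseg : forall b : sig B, segm R x0 (proj1_sig (cid (tot b))).
      move=> b; apply/dom; case: (cid _) => x h /=; by exists (proj1_sig b).
    exists (fun b => exist (segm R x0) _ (inseg b)).
    move=> b1 b2 e; apply: sig_eq.
    have e' := f_equal (@proj1_sig _ _) e; simpl in e'.
    move: e'; case: (cid _) => y1 h1 /=.
    case: (cid _) => y2 h2 /= e'; subst y2.
    exact: Gf h1 h2.
exfalso.
have [b0 nb0] := Classical_Pred_Type.not_all_ex_not _ _ nsurj.
have [Bb0 nG] : B b0 /\ ~ exists x, G x b0.
  split; first by apply: Classical_Prop.NNPP => h; apply: nb0 => hb.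
  by move=> ex; apply: nb0 => _.
pose H x y := G x y \/ (x = x0 /\ y = b0).
have vH : validG R B H.
  split; [|split; [|split]].
  - move=> x y y' [h|[e1 e2]] [h'|[e3 e4]].
    + exact: Gf h h'.
    + subst x; exfalso; apply: nx0; by exists y.
    + subst x; exfalso; apply: nx0; by exists y'.
    + by subst.
  - move=> x x' y [h|[e1 e2]] [h'|[e3 e4]].
    + exact: Gi h h'.
    + subst y; exfalso; apply: nG; by exists x.
    + subst y; exfalso; apply: nG; by exists x'.
    + by subst.
  - by move=> x y [h|[_ ->]] //; exact: GB h.
  - move=> x y x' [h|[e1 e2]] Rx; last subst x.
    + have [y' h'] := Gd _ _ _ h Rx; by exists y'; left.
    + case: (Classical_Prop.classic (x' = x0)) => [->|ne]; first by exists b0; right.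
      have [z hz] : exists z, G x' z by apply/dom.
      by exists z; left.
have := Gmax H vH (fun x y h => or_introl h) x0 b0 (or_intror (conj erefl erefl)).
move=> h; apply: nx0; by exists b0.
Qed.

Lemma card_le_trans (T U V : Type) (A : T -> Prop) (B : U -> Prop) (C : V -> Prop) :
  card_le A B -> card_le B C -> card_le A C.
Proof. move=> [f fi] [g gi]; exists (fun a => g (f a)) => a1 a2 e; exact: fi (gi _ _ e). Qed.

Lemma card_le_sub (T : Type) (A B : T -> Prop) : (forall x, A x -> B x) -> card_le A B.
Proof.
move=> h; exists (fun a => exist B (proj1_sig a) (h _ (proj2_sig a))) => a1 a2 e.
apply: sig_eq; exact: (f_equal (@proj1_sig _ _) e).
Qed.

Lemma card_le_image (T U : Type) (D : U -> Prop) (g : U -> T) :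
  card_le (fun x => exists d, D d /\ g d = x) D.
Proof.
exists (fun a => exist D (proj1_sig (cid (proj2_sig a))) (proj1 (proj2_sig (cid (proj2_sig a))))).
move=> [a1 p1] [a2 p2] e; apply: sig_eq => /=.
have e' := f_equal (@proj1_sig _ _) e; simpl in e'.
move: e'; case: (cid p1) => d1 [_ h1] /=; case: (cid p2) => d2 [_ h2] /= e'.
by subst.
Qed.

Lemma SB (X Y : Type) (f : X -> Y) (g : Y -> X) :
  (forall a b, f a = f b -> a = b) -> (forall a b, g a = g b -> a = b) ->
  exists h : X -> Y, (forall a b, h a = h b -> a = b) /\ (forall y, exists x, h x = y).
Proof.
move=> fi gi.
pose C x := forall S : X -> Prop, (forall x, (~ exists y, g y = x) -> S x) -> (forall x, S x -> S (g (f x))) -> S x.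
have Cbase : forall x, (~ exists y, g y = x) -> C x by move=> x nx S h1 h2; exact: h1.
have Cstep : forall x, C x -> C (g (f x)) by move=> x Cx S h1 h2; apply h2; exact: (Cx S h1 h2).
have Cinv : forall x, C x -> (~ exists y, g y = x) \/ exists x', C x' /\ x = g (f x').
  move=> x Cx.
  have := Cx (fun x => C x /\ ((~ exists y, g y = x) \/ exists x', C x' /\ x = g (f x'))).
  case.
  - by move=> z nz; split; [exact: Cbase|left].
  - by move=> z [Cz _]; split; [exact: Cstep|right; exists z].
  - by [].
have E : forall x, exists y, (C x /\ y = f x) \/ (~ C x /\ g y = x).
  move=> x; case: (Classical_Prop.classic (C x)) => Cx.
  - by exists (f x); left.
  - have [y hy] : exists y, g y = x.
      apply: Classical_Prop.NNPP => n; apply: Cx; exact: Cbase.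
    by exists y; right.
exists (fun x => proj1_sig (cid (E x))); split.
- move=> a b; case: (cid (E a)) => ya ha; case: (cid (E b)) => yb hb /= e; subst yb.
  case: ha => [[Ca ea]|[Ca ea]]; case: hb => [[Cb eb]|[Cb eb]].
  + by apply: fi; rewrite -ea -eb.
  + exfalso; apply: Cb; rewrite -eb ea; exact: Cstep.
  + exfalso; apply: Ca; rewrite -ea eb; exact: Cstep.
  + by rewrite -ea -eb.
- move=> y; case: (Classical_Prop.classic (C (g y))) => Cy.
  + case: (Cinv _ Cy) => [n|[x' [Cx' e]]]; first by exfalso; apply: n; exists y.
    exists x'; case: (cid (E x')) => z [[_ ez]|[n _]] /=; last by exfalso; exact: n.
    by rewrite ez; apply: gi.
  + exists (g y); case: (cid (E (g y))) => z [[n _]|[_ e]] /=; first by exfalso; exact: Cy n.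
    exact: gi.
Qed.

Lemma equip_of (T U : Type) (A : T -> Prop) (B : U -> Prop) :
  card_le A B -> card_le B A -> equipotent A B.
Proof. move=> [f fi] [g gi]; exact: SB fi gi. Qed.

Lemma min_card (T : Type) (F : (T -> Prop) -> Prop) (HF : F (fun _ => True)) :
  exists A, F A /\ forall B, F B -> card_le A B.
Proof.
have [R [Rtot [Ranti [Rtr Rmin]]]] := wo_exists T.
case: (Classical_Prop.classic (exists x A, F A /\ card_le A (segm R x) /\ card_le (segm R x) A)) => [ex|nex].
- have [x0 [[A0 [FA0 [A0s sA0]]] x0min]] := Rmin _ ex.
  exists A0; split => // B FB.
  case: (@key T R Rtot Ranti Rmin B) => [h|[x [sB Bs]]].
  + apply: card_le_trans h; exact: card_le_sub.
  + have Rx : R x0 x by apply: x0min; exists B.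
    apply: (card_le_trans A0s); apply: card_le_trans sB.
    apply: card_le_sub => y [Ry ny]; split; first exact: Rtr Ry Rx.
    move=> e; subst y; apply: ny; exact: Ranti.
- exists (fun _ => True); split => // B FB.
  case: (@key T R Rtot Ranti Rmin B) => // [[x [sB Bs]]].
  by exfalso; apply: nex; exists x, B.
Qed.

Lemma cof_unb (T : Type) (le : T -> T -> Prop) (Htr : forall x y z, le x y -> le y z -> le x z)
  (Hu : unbounded_set le (fun _ => True)) (B : T -> Prop) : cofinal_set le B -> unbounded_set le B.
Proof.
move=> cB y; have [x [_ nx]] := Hu y; have [b [Bb xb]] := cB x.
exists b; split => // by_; apply: nx; exact: Htr xb by_.
Qed.

Theorem lemma5p2 (P : Type) (leP : P -> P -> Prop) (Q : Type) (leQ : Q -> Q -> Prop)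
  (HP : is_poset leP) (HQ : is_poset leQ)
  (HPunb : unbounded_set leP (fun _ => True))
  (HQunb : unbounded_set leQ (fun _ => True))
  (phi : P -> Q) (psi : Q -> P)
  (Htukey : forall (p : P) (q : Q), leP p (psi q) \/ leQ q (phi p)) :
  (exists A, is_add_witness leP A) /\
  (exists B, is_cof_witness leP B) /\
  (exists C, is_cof_witness leQ C) /\
  (exists D, is_add_witness leQ D) /\
  (forall (A B : P -> Prop) (C D : Q -> Prop),
      is_add_witness leP A -> is_cof_witness leP B ->
      is_cof_witness leQ C -> is_add_witness leQ D ->
      equipotent A B /\ equipotent B C /\ equipotent C D).
Proof.
case: HP => [Prefl [_ Ptr]]; case: HQ => [Qrefl [_ Qtr]].
split; first exact: (@min_card P (unbounded_set leP)).
split; first by apply: (@min_card P (cofinal_set leP)) => x; exists x.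
split; first by apply: (@min_card Q (cofinal_set leQ)) => x; exists x.
split; first exact: (@min_card Q (unbounded_set leQ)).
move=> A B C D [uA mA] [cB mB] [cC mC] [uD mD].
have AB : card_le A B by apply: mA; exact: cof_unb.
have DC : card_le D C by apply: mD; exact: cof_unb.
have BD : card_le B D.
  apply: (card_le_trans _ (card_le_image D psi)); apply: mB => p.
  have [d [Dd nd]] := uD (phi p).
  exists (psi d); split; first by exists d.
  by case: (Htukey p d).
have CA : card_le C A.
  apply: (card_le_trans _ (card_le_image A phi)); apply: mC => q.
  have [a [Aa na]] := uA (psi q).
  exists (phi a); split; first by exists a.
  by case: (Htukey a q).
split; [|split]; apply: equip_of.
- exact: AB.
- exact: card_le_trans BD (card_le_trans DC CA).
- exact: card_le_trans BD DC.
- exact: card_le_trans CA AB.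
- exact: card_le_trans CA (card_le_trans AB BD).
- exact: DC.
Qed.
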